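(* Let $G$ be a group generated by a finite set $S$, acting by isometries on a geodesic $\delta$-hyperbolic $\mathbb{R}$-metric space $(X,d)$ ($\delta\geqslant0$), and let $x\in X$ with stabilizer $G_x$. Suppose the action is proper relative to $x$ and satisfies $(R2,k)$ for some $k\in\mathbb{N}$. Then $G$ is weakly hyperbolic relative to $G_x$.
   Context: An $\mathbb{R}$-metric space is an ordinary metric space; it is geodesic if any two points are joined by an isometrically embedded real interval; with Gromov product $(y\cdot z)_w=\tfrac12(d(y,w)+d(z,w)-d(y,z))$ it is $\delta$-hyperbolic if $(y\cdot z)_w\geqslant\min\{(y\cdot u)_w,(u\cdot z)_w\}-\delta$ for all $w,y,z,u$. The action satisfies $(R2,k)$ (with respect to $x$) if for all $g,h\in G$ there is $u\in G$ with $d(x,ux)\leqslant(gx\cdot hx)_x+k\delta$, $d(x,u^{-1}gx)\leqslant(g^{-1}x\cdot g^{-1}hx)_x+k\delta$ and $d(x,u^{-1}hx)\leqslant(h^{-1}x\cdot h^{-1}gx)_x+k\delta$. Let $\Gamma(G,S\cup G_x)$ be the Cayley graph of $G$ with respect to the (possibly infinite) generating set $S\cup G_x$, with its path metric. The action is proper relative to $x$ if there is $\alpha>0$ with $d(x,gx)>\alpha$ for every $g\in G\smallsetminus G_x$, and for every $N\in\mathbb{N}$ the set $B_N=\{g\in G: d(x,gx)\leqslant N\}$ is bounded in $\Gamma(G,S\cup G_x)$. $G$ is weakly hyperbolic relative to a subgroup $H$ (in the sense of Farb and Osin) if the Cayley graph $\Gamma(G,S\cup H)$ is a Gromov-hyperbolic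 metric space. *)

(* Defs.v *)
From Stdlib Require Import Reals List.
Open Scope R_scope.
Set Implicit Arguments.

Record is_group (G : Type) (mul : G -> G -> G) (inv : G -> G) (e : G) : Prop := {
  grp_assoc : forall a b c, mul a (mul b c) = mul (mul a b) c;
  grp_idl : forall a, mul e a = a;
  grp_invl : forall a, mul (inv a) a = e
}.

(** Words over a subset [A] of [G]: a letter [(false,a)] stands for [a],
    [(true,a)] for [a^-1]; every [a] must lie in [A]. *)
Definition letter_val (G : Type) (inv : G -> G) (l : bool * G) : G :=
  if fst l then inv (snd l) else snd l.

Definition word_val (G : Type) (mul : G -> G -> G) (inv : G -> G) (e : G)
  (w : list (bool * G)) : G :=
  fold_right (fun l acc => mul (letter_val inv l) acc) e w.

Definition word_over (G : Type) (A : G -> Prop) (w : list (bool * G)) : Prop :=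
  Forall (fun l => A (snd l)) w.

Definition generates (G : Type) (mul : G -> G -> G) (inv : G -> G) (e : G)
  (A : G -> Prop) : Prop :=
  forall g, exists w, word_over A w /\ word_val mul inv e w = g.

Definition wlen_le (G : Type) (mul : G -> G -> G) (inv : G -> G) (e : G)
  (A : G -> Prop) (g : G) (n : nat) : Prop :=
  exists w, word_over A w /\ word_val mul inv e w = g /\ (length w <= n)%nat.

Definition cay_dist (G : Type) (mul : G -> G -> G) (inv : G -> G) (e : G)
  (A : G -> Prop) (g h : G) (n : nat) : Prop :=
  wlen_le mul inv e A (mul (inv g) h) n /\
  forall m, wlen_le mul inv e A (mul (inv g) h) m -> (n <= m)%nat.

Definition cay_bounded (G : Type) (mul : G -> G -> G) (inv : G -> G) (e : G)
  (A : G -> Prop) (B : G -> Prop) : Prop :=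
  exists M : nat, forall g, B g -> wlen_le mul inv e A g M.

Definition gprod (dyw dzw dyz : R) : R := (dyw + dzw - dyz) / 2.

(** Gamma(G,A) is Gromov hyperbolic (four-point condition on its vertex set
    with the path metric, for some constant). *)
Definition cay_hyperbolic (G : Type) (mul : G -> G -> G) (inv : G -> G) (e : G)
  (A : G -> Prop) : Prop :=
  exists dl : R, 0 <= dl /\
  forall w y z u (dyw dzw dyz duw dyu duz : nat),
    cay_dist mul inv e A y w dyw -> cay_dist mul inv e A z w dzw ->
    cay_dist mul inv e A y z dyz -> cay_dist mul inv e A u w duw ->
    cay_dist mul inv e A y u dyu -> cay_dist mul inv e A u z duz ->
    gprod (INR dyw) (INR dzw) (INR dyz) >=
      Rmin (gprod (INR dyw) (INR duw) (INR dyu))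
           (gprod (INR duw) (INR dzw) (INR duz)) - dl.

Definition weakly_rel_hyperbolic (G : Type) (mul : G -> G -> G) (inv : G -> G)
  (e : G) (S : list G) (H : G -> Prop) : Prop :=
  cay_hyperbolic mul inv e (fun g => In g S \/ H g).

Record is_metric (X : Type) (d : X -> X -> R) : Prop := {
  met_nonneg : forall a b, 0 <= d a b;
  met_sep : forall a b, d a b = 0 <-> a = b;
  met_sym : forall a b, d a b = d b a;
  met_tri : forall a b c, d a c <= d a b + d b c
}.

Definition geodesic_space (X : Type) (d : X -> X -> R) : Prop :=
  forall y z, exists gam : R -> X, gam 0 = y /\ gam (d y z) = z /\
    forall s t, 0 <= s <= d y z -> 0 <= t <= d y z ->
      d (gam s) (gam t) = Rabs (s - t).

Definition gromov (X : Type) (d : X -> X -> R) (y z w : X) : R :=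
  (d y w + d z w - d y z) / 2.

Definition hyperbolic (X : Type) (d : X -> X -> R) (delta : R) : Prop :=
  forall w y z u, gromov d y z w >= Rmin (gromov d y u w) (gromov d u z w) - delta.

Definition isometric_action (G X : Type) (mul : G -> G -> G) (e : G)
  (d : X -> X -> R) (act : G -> X -> X) : Prop :=
  (forall p, act e p = p) /\
  (forall g h p, act (mul g h) p = act g (act h p)) /\
  (forall g p q, d (act g p) (act g q) = d p q).

Definition R2k (G X : Type) (mul : G -> G -> G) (inv : G -> G)
  (d : X -> X -> R) (act : G -> X -> X) (x : X) (delta : R) (k : nat) : Prop :=
  forall g h : G, exists u : G,
    d x (act u x) <= gromov d (act g x) (act h x) x + INR k * delta /\
    d x (act (mul (inv u) g) x)
      <= gromov d (act (inv g) x) (act (mul (inv g) h) x) x + INR k * delta /\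
    d x (act (mul (inv u) h) x)
      <= gromov d (act (inv h) x) (act (mul (inv h) g) x) x + INR k * delta.

Definition proper_rel (G X : Type) (mul : G -> G -> G) (inv : G -> G) (e : G)
  (S : list G) (d : X -> X -> R) (act : G -> X -> X) (x : X) : Prop :=
  (exists alpha, alpha > 0 /\ forall g, act g x <> x -> d x (act g x) > alpha) /\
  (forall N : nat,
     cay_bounded mul inv e (fun g => In g S \/ act g x = x)
                 (fun g => d x (act g x) <= INR N)).

(* Main.v *)
Require Import Defs.
From Stdlib Require Import Reals List Lra Lia Classical Wf_nat.
Open Scope R_scope.
Set Implicit Arguments.

Section Grp.
Variables (G : Type) (mul : G -> G -> G) (inv : G -> G) (e : G).
Hypothesis Hg : is_group mul inv e.

Lemma gA a b c : mul a (mul b c) = mul (mul a b) c.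
Proof. apply (grp_assoc Hg). Qed.
Lemma gIl a : mul e a = a.
Proof. apply (grp_idl Hg). Qed.
Lemma gVl a : mul (inv a) a = e.
Proof. apply (grp_invl Hg). Qed.
Lemma gKl a b : mul (inv a) (mul a b) = b.
Proof. rewrite gA, gVl, gIl; auto. Qed.
Lemma gVr a : mul a (inv a) = e.
Proof.
  set (y := mul a (inv a)).
  assert (Hy : mul y y = y).
  { unfold y. rewrite <- gA, (gA (inv a) a), gVl, gIl. auto. }
  rewrite <- (gKl y y), Hy, gVl. auto.
Qed.
Lemma gIr a : mul a e = a.
Proof. rewrite <- (gVl a), gA, gVr, gIl. auto. Qed.
Lemma gKr a b : mul a (mul (inv a) b) = b.
Proof. rewrite gA, gVr, gIl; auto. Qed.
Lemma ginv_uniq a b : mul a b = e -> b = inv a.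
Proof. intro H. rewrite <- (gKl a b), H, gIr. auto. Qed.
Lemma gVV a : inv (inv a) = a.
Proof. symmetry. apply ginv_uniq. apply gVl. Qed.
Lemma gVM a b : inv (mul a b) = mul (inv b) (inv a).
Proof. symmetry. apply ginv_uniq. rewrite <- gA, (gA b), gVr, gIl, gVr. auto. Qed.
Lemma gVe : inv e = e.
Proof. symmetry; apply ginv_uniq; apply gIl. Qed.

Definition flipl (l : bool * G) := (negb (fst l), snd l).
Definition winv (w : list (bool * G)) := rev (map flipl w).

Lemma wv_app w1 w2 : word_val mul inv e (w1 ++ w2) =
  mul (word_val mul inv e w1) (word_val mul inv e w2).
Proof.
  induction w1 as [|l w1 IH]; simpl. rewrite gIl; auto.
  rewrite IH, gA. auto.
Qed.

Lemma lv_flip l : letter_val inv (flipl l) = inv (letter_val inv l).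
Proof. destruct l as [[|] a]; unfold letter_val, flipl; simpl; auto. rewrite gVV; auto. Qed.

Lemma wv_inv w : word_val mul inv e (winv w) = inv (word_val mul inv e w).
Proof.
  induction w as [|l w IH]; unfold winv in *; simpl. rewrite gVe; auto.
  rewrite wv_app, IH. simpl. rewrite gIr, lv_flip, gVM. auto.
Qed.

Variable A : G -> Prop.

Lemma wo_app w1 w2 : word_over A w1 -> word_over A w2 -> word_over A (w1 ++ w2).
Proof. unfold word_over; intros; apply Forall_app; auto. Qed.
Lemma wo_inv w : word_over A w -> word_over A (winv w).
Proof.
  unfold word_over, winv; intro H. apply Forall_rev. apply Forall_map.
  eapply Forall_impl; [|exact H]. intros [b a]; simpl; auto.
Qed.
Lemma wo_firstn n w : word_over A w -> word_over A (firstn n w).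
Proof.
  unfold word_over. revert w; induction n; intros [|l w] H; simpl; auto.
  inversion H; subst; constructor; auto.
Qed.
Lemma wo_skipn n w : word_over A w -> word_over A (skipn n w).
Proof.
  unfold word_over. revert w; induction n; intros [|l w] H; simpl; auto.
  inversion H; subst; auto.
Qed.

Notation wl := (wlen_le mul inv e A).

Lemma wl_mono g n m : wl g n -> (n <= m)%nat -> wl g m.
Proof. intros [w [H1 [H2 H3]]] H. exists w; repeat split; auto; lia. Qed.
Lemma wl_inv g n : wl g n -> wl (inv g) n.
Proof.
  intros [w [H1 [H2 H3]]]. exists (winv w); repeat split.
  apply wo_inv; auto. rewrite wv_inv, H2; auto.
  unfold winv; rewrite length_rev, length_map; auto.
Qed.
Lemma wl_mul g h n m : wl g n -> wl h m -> wl (mul g h) (n + m).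
Proof.
  intros [w [H1 [H2 H3]]] [w' [H1' [H2' H3']]]. exists (w ++ w'); repeat split.
  apply wo_app; auto. rewrite wv_app; subst; auto. rewrite length_app; lia.
Qed.
Lemma wl_e : wl e 0.
Proof. exists nil; repeat split; simpl; auto. constructor. Qed.
Lemma wl_gen a : A a -> wl a 1.
Proof. intro H. exists ((false, a) :: nil); repeat split; simpl; auto.
  constructor; auto. apply gIr. Qed.

Lemma nat_min (P : nat -> Prop) : (exists n, P n) -> exists n, P n /\ forall m, P m -> (n <= m)%nat.
Proof.
  intros [n Hn]. revert Hn. induction n as [n IH] using (well_founded_induction lt_wf). intro Hn.
  destruct (classic (exists m, P m /\ (m < n)%nat)) as [[m [Hm1 Hm2]]|Hno].
  - apply (IH m); auto.
  - exists n; split; auto. intros m Hm. destruct (Nat.lt_ge_cases m n); auto.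
    exfalso; apply Hno; eauto.
Qed.

Lemma cay_dist_ex g h : (exists n, wl (mul (inv g) h) n) -> exists n, cay_dist mul inv e A g h n.
Proof.
  intro H. destruct (nat_min _ H) as [n [H1 H2]]. exists n; split; auto.
Qed.

Lemma cay_dist_sym g h n : cay_dist mul inv e A g h n -> cay_dist mul inv e A h g n.
Proof.
  intros [H1 H2]. split.
  - apply wl_inv in H1. rewrite gVM, gVV in H1. auto.
  - intros m Hm. apply H2. apply wl_inv in Hm. rewrite gVM, gVV in Hm. auto.
Qed.

End Grp.

Unset Implicit Arguments.

Lemma INR4 m : (4 <= m)%nat -> 4 <= INR m.
Proof. intro H; apply le_INR in H; simpl in H; lra. Qed.

Lemma pow2_sq (K : nat) : (4 <= K)%nat -> INR K * INR K <= 2 ^ K.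
Proof.
  intro H. induction H.
  - simpl. lra.
  - rewrite S_INR. simpl pow. assert (4 <= INR m) by (apply INR4; auto).
    nra.
Qed.

Lemma Kbound (al be : R) : 0 <= al -> 0 <= be ->
  exists K0, forall K : nat, 2 ^ K <= al + be * INR K -> INR K <= K0.
Proof.
  intros Ha Hb. exists (4 + al + be). intros K HK.
  destruct (Compare_dec.le_lt_dec 4 K) as [H4|H4].
  - pose proof (pow2_sq K H4). assert (4 <= INR K) by (apply INR4; auto).
    nra.
  - assert (INR K <= 4) by (assert (H5: (K <= 4)%nat) by lia; apply le_INR in H5; simpl in H5; lra). lra.
Qed.

Fixpoint fmin (f : nat -> R) (n : nat) : R :=
  match n with O => f O | S m => Rmin (fmin f m) (f (S m)) end.

Lemma fmin_le f n i : (i <= n)%nat -> fmin f n <= f i.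
Proof.
  induction n; intro H; simpl.
  - replace i with O by lia. lra.
  - destruct (Nat.eq_dec i (S n)). subst. apply Rmin_r.
    eapply Rle_trans. apply Rmin_l. apply IHn. lia.
Qed.

Lemma fmin_ex f n : exists i, (i <= n)%nat /\ fmin f n = f i.
Proof.
  induction n; simpl. exists O; auto.
  destruct IHn as [i [H1 H2]]. unfold Rmin. destruct (Rle_dec (fmin f n) (f (S n))).
  exists i; auto. exists (S n); auto.
Qed.

Section Met.
Variables (X : Type) (d : X -> X -> R).
Hypothesis Hm : is_metric d.
Variable delta : R.
Hypothesis Hd : 0 <= delta.
Hypothesis Hh : hyperbolic d delta.

Lemma dsym a b : d a b = d b a.
Proof. apply (met_sym Hm). Qed.
Lemma dtri a b c : d a c <= d a b + d b c.
Proof. apply (met_tri Hm). Qed.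
Lemma dpos a b : 0 <= d a b.
Proof. apply (met_nonneg Hm). Qed.
Lemma dself a : d a a = 0.
Proof. apply (met_sep Hm); auto. Qed.

Lemma gr_sym a b w : gromov d a b w = gromov d b a w.
Proof. unfold gromov. rewrite (dsym a b). lra. Qed.

Lemma chain (q : X) (z : nat -> X) (r : R) :
  forall K a N, (1 <= N)%nat -> (N <= 2 ^ K)%nat ->
  (forall i, (a <= i < a + N)%nat -> gromov d (z i) (z (S i)) q >= r) ->
  gromov d (z a) (z (a + N)%nat) q >= r - INR K * delta.
Proof.
  induction K; intros a N H1 H2 H3.
  - simpl in H2. replace N with 1%nat by lia. rewrite Nat.add_1_r.
    simpl. specialize (H3 a ltac:(lia)). lra.
  - destruct (Compare_dec.le_lt_dec N (2 ^ K)) as [HN|HN].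
    + specialize (IHK a N H1 HN H3). rewrite S_INR. nra.
    + set (N1 := (2 ^ K)%nat). assert (1 <= N1)%nat.
      { unfold N1. pose proof (Nat.pow_nonzero 2 K). lia. }
      simpl in H2. fold N1 in H2, HN.
      pose proof (IHK a N1 H ltac:(unfold N1; lia) ltac:(intros; apply H3; lia)) as E1.
      pose proof (IHK (a + N1)%nat (N - N1)%nat ltac:(lia) ltac:(unfold N1 in *; lia)
        ltac:(intros; apply H3; lia)) as E2.
      replace (a + N1 + (N - N1))%nat with (a + N)%nat in E2 by lia.
      pose proof (Hh q (z a) (z (a + N)%nat) (z (a + N1)%nat)) as H4.
      rewrite S_INR. unfold Rmin in H4. destruct (Rle_dec _ _); lra.
Qed.

Lemma neargeo (a b q : X) (gam : R -> X) :
  gam 0 = a -> gam (d a b) = b ->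
  (forall s t, 0 <= s <= d a b -> 0 <= t <= d a b -> d (gam s) (gam t) = Rabs (s - t)) ->
  exists t, 0 <= t <= d a b /\ d q (gam t) <= gromov d a b q + 2 * delta.
Proof.
  intros H0 H1 H2. set (t := gromov d q b a).
  assert (Ht : 0 <= t <= d a b).
  { unfold t, gromov. pose proof (dtri q a b). pose proof (dtri a q b).
    rewrite (dsym a q) in *. rewrite (dsym b a). pose proof (dtri q b a). rewrite (dsym b a) in *. split; lra. }
  exists t; split; auto.
  assert (E1 : d (gam t) a = t).
  { transitivity (d (gam t) (gam 0)). rewrite H0; auto. rewrite H2 by (auto; pose proof (dpos a b); lra).
    rewrite Rminus_0_r, Rabs_right; lra. }
  assert (E2 : d (gam t) b = d a b - t).
  { transitivity (d (gam t) (gam (d a b))). rewrite H1; auto. rewrite H2 by (auto; pose proof (dpos a b); lra).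
    rewrite Rabs_left1; lra. }
  pose proof (Hh a q (gam t) b) as H.
  unfold gromov in H. rewrite E1, (dsym b a), (dsym b (gam t)), E2 in H.
  assert (Et : t = (d q a + d a b - d q b)/2) by (unfold t, gromov; rewrite (dsym b a); auto).
  unfold gromov. rewrite (dsym a q), (dsym b q).
  unfold Rmin in H. destruct (Rle_dec _ _) in H; lra.
Qed.

Lemma core (p : nat -> X) (n : nat) (L D : R) (y y1 y2 : X) (a b : nat) :
  1 <= L -> (a <= b <= n)%nat ->
  (forall i, (i < n)%nat -> d (p i) (p (S i)) <= L) ->
  (forall i, (i <= n)%nat -> D <= d y (p i)) ->
  gromov d y1 (p a) y >= D - 1 -> gromov d (p b) y2 y >= D - 1 ->
  gromov d y1 y2 y <= 0 ->
  forall K, (b - a + 2 <= 2 ^ K)%nat -> D <= L + INR K * delta.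
Proof.
  intros HL Hab Hst HD H1 H2 H0 K HK.
  set (z := fun k => if Nat.eqb k 0 then y1 else if Nat.leb k (b - a + 1) then p (a + k - 1)%nat else y2).
  assert (Z0 : z 0%nat = y1) by reflexivity.
  assert (ZN : z (0 + (b - a + 2))%nat = y2).
  { unfold z. replace (Nat.eqb _ 0) with false by (symmetry; apply Nat.eqb_neq; lia).
    replace (Nat.leb _ _) with false by (symmetry; apply Nat.leb_gt; lia). auto. }
  assert (Zm : forall i, (1 <= i <= b - a + 1)%nat -> z i = p (a + i - 1)%nat).
  { intros i Hi. unfold z. replace (Nat.eqb _ 0) with false by (symmetry; apply Nat.eqb_neq; lia).
    replace (Nat.leb _ _) with true by (symmetry; apply Nat.leb_le; lia). auto. }
  pose proof (chain y z (D - L) K 0 (b - a + 2) ltac:(lia) HK) as C.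
  rewrite Z0, ZN in C.
  assert (Hc : forall i, (0 <= i < 0 + (b - a + 2))%nat -> gromov d (z i) (z (S i)) y >= D - L).
  { intros i Hi. destruct (Nat.eq_dec i 0) as [->|Hi0].
    - rewrite Z0, Zm by lia. replace (a + 1 - 1)%nat with a by lia. lra.
    - destruct (Nat.eq_dec i (b - a + 1)) as [->|Hi1].
      + rewrite Zm by lia. replace (S (b - a + 1)) with (0 + (b - a + 2))%nat by lia.
        rewrite ZN. replace (a + (b - a + 1) - 1)%nat with b by lia. lra.
      + rewrite !Zm by lia. replace (a + S i - 1)%nat with (S (a + i - 1)) by lia.
        pose proof (Hst (a + i - 1)%nat ltac:(lia)). pose proof (HD (a + i - 1)%nat ltac:(lia)).
        pose proof (HD (S (a + i - 1))%nat ltac:(lia)).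
        unfold gromov. rewrite (dsym (p _) y), (dsym (p (S _)) y). lra. }
  specialize (C Hc). lra.
Qed.
Lemma nearmax (F : R -> R) (l B : R) : 0 <= l -> (forall t, 0 <= t <= l -> F t <= B) ->
  exists t0, 0 <= t0 <= l /\ forall t, 0 <= t <= l -> F t <= F t0 + 1.
Proof.
  intros Hl HB.
  set (E := fun v => exists t, 0 <= t <= l /\ v = F t).
  assert (Hb : bound E) by (exists B; intros v [t [Ht ->]]; auto).
  assert (He : exists v, E v) by (exists (F 0); exists 0; split; [lra|auto]).
  destruct (completeness E Hb He) as [m [Hm1 Hm2]].
  destruct (classic (exists t0, 0 <= t0 <= l /\ forall t, 0 <= t <= l -> F t <= F t0 + 1)) as [H|H]; auto.
  exfalso.
  assert (Hub : is_upper_bound E (m - 1)).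
  { intros v [t0 [Ht0 ->]]. destruct (Rle_dec (F t0) (m - 1)) as [|Hn]; auto.
    exfalso. apply H. exists t0; split; auto. intros t Ht.
    assert (F t <= m) by (apply Hm1; exists t; auto). lra. }
  specialize (Hm2 _ Hub). lra.
Qed.

Lemma dgam (l : R) (gam : R -> X) s t :
  (forall s t, 0 <= s <= l -> 0 <= t <= l -> d (gam s) (gam t) = Rabs (s - t)) ->
  0 <= s <= l -> 0 <= t <= l -> s <= t -> d (gam s) (gam t) = t - s.
Proof. intros H Hs Ht Hst. rewrite H by auto. rewrite Rabs_left1; lra. Qed.

Lemma morse (Hgeo : geodesic_space d) (L lam mu K : R) : 1 <= L -> 0 <= lam -> 0 <= mu -> 0 <= K ->
  exists C, forall n (p : nat -> X) q,
  (forall i, (i < n)%nat -> d (p i) (p (S i)) <= L) ->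
  (forall i j, (i <= j <= n)%nat -> INR (j - i) <= lam * d (p i) (p j) + mu) ->
  gromov d (p 0%nat) (p n) q <= K -> exists i, (i <= n)%nat /\ d q (p i) <= C.
Proof.
  intros HL Hlam Hmu HK.
  destruct (Kbound (2*(6*lam*L + 6*lam + mu + 2)) (12*lam*delta)) as [K0 HK0]; try nra.
  exists (L + K0 * delta + 1 + K + 2 * delta).
  intros n p q Hst Hqg Hq.
  destruct (Hgeo (p 0%nat) (p n)) as [gam [G0 [G1 G2]]].
  remember (d (p 0%nat) (p n)) as l eqn:El.
  assert (Hl : 0 <= l) by (subst; apply dpos).
  set (f := fun y => fmin (fun i => d y (p i)) n).
  destruct (nearmax (fun t => f (gam t)) l l Hl) as [t0 [Ht0 Hmax]].
  { intros t Ht. simpl. unfold f. eapply Rle_trans. apply (fmin_le _ n 0); lia.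
    rewrite <- G0. rewrite dsym. rewrite (dgam _ gam 0 t G2); lra. }
  set (y := gam t0). set (D := f y).
  assert (HD : forall i, (i <= n)%nat -> D <= d y (p i)) by (intros i Hi; unfold D, f; apply (fmin_le (fun i => d y (p i))); auto).
  assert (HD0 : 0 <= D) by (destruct (fmin_ex (fun i => d y (p i)) n) as [i [_ Hi]];
     unfold D, f; rewrite Hi; apply dpos).
  assert (Hnear : forall t, 0 <= t <= l -> exists i, (i <= n)%nat /\ d (gam t) (p i) <= D + 1).
  { intros t Ht. destruct (fmin_ex (fun i => d (gam t) (p i)) n) as [i [Hi1 Hi2]].
    exists i; split; auto. specialize (Hmax t Ht). simpl in Hmax. unfold f in Hmax. rewrite Hi2 in Hmax.
    exact Hmax. }
  assert (HLp : exists t1 a, 0 <= t1 <= t0 /\ t0 - t1 <= 2 * D + 2 /\ (a <= n)%nat /\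
     d (gam t1) (p a) <= D + 1 /\ gromov d (gam t1) (p a) y >= D - 1).
  { destruct (Rle_dec 0 (t0 - (2 * D + 2))) as [Hc|Hc].
    - destruct (Hnear (t0 - (2 * D + 2)) ltac:(lra)) as [a [Ha1 Ha2]].
      exists (t0 - (2 * D + 2)), a. repeat split; auto; try lra.
      pose proof (HD a Ha1). unfold gromov.
      unfold y in *. rewrite (dgam _ gam (t0 - (2 * D + 2)) t0 G2) by lra. rewrite (dsym (p a) (gam t0)). lra.
    - exists 0, 0%nat. repeat split; try lra; try lia. rewrite G0, dself; lra.
      rewrite G0. unfold gromov. rewrite dself. pose proof (HD 0%nat ltac:(lia)). rewrite (dsym (p 0%nat) y). lra. }
  assert (HRp : exists t2 b, t0 <= t2 <= l /\ t2 - t0 <= 2 * D + 2 /\ (b <= n)%nat /\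
     d (gam t2) (p b) <= D + 1 /\ gromov d (p b) (gam t2) y >= D - 1).
  { destruct (Rle_dec (t0 + (2 * D + 2)) l) as [Hc|Hc].
    - destruct (Hnear (t0 + (2 * D + 2)) ltac:(lra)) as [b [Hb1 Hb2]].
      exists (t0 + (2 * D + 2)), b. repeat split; auto; try lra.
      pose proof (HD b Hb1). unfold gromov.
      rewrite (dsym (gam _) y). unfold y in *. rewrite (dgam _ gam t0 (t0 + (2 * D + 2)) G2) by lra.
      rewrite (dsym (p b) (gam t0)), (dsym (p b) (gam _)). lra.
    - exists l, n. repeat split; try lra; try lia. rewrite G1, dself; lra.
      rewrite G1. unfold gromov. rewrite dself. pose proof (HD n ltac:(lia)). rewrite (dsym (p n) y). lra. }
  destruct HLp as [t1 [a [Ht1 [Ht1' [Ha [Ha1 Ha2]]]]]].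
  destruct HRp as [t2 [b [Ht2 [Ht2' [Hb [Hb1 Hb2]]]]]].
  assert (Hg0 : gromov d (gam t1) (gam t2) y <= 0).
  { unfold gromov, y in *. rewrite (dsym (gam t2) (gam t0)).
    rewrite (dgam _ gam t1 t0 G2), (dgam _ gam t0 t2 G2), (dgam _ gam t1 t2 G2) by lra. lra. }
  assert (Hdab : d (p a) (p b) <= 6 * D + 6).
  { pose proof (dtri (p a) (gam t1) (p b)). pose proof (dtri (gam t1) (gam t2) (p b)).
    rewrite (dgam _ gam t1 t2 G2) in * by lra. rewrite (dsym (p a) (gam t1)) in *.
    rewrite (dsym (gam t2) (p b)) in *. lra. }
  set (m := if Nat.leb a b then (b - a)%nat else (a - b)%nat).
  assert (Hmb : INR m <= lam * (6 * D + 6) + mu).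
  { unfold m. destruct (Nat.leb a b) eqn:E.
    - apply Nat.leb_le in E. pose proof (Hqg a b ltac:(lia)). nra.
    - apply Nat.leb_gt in E. pose proof (Hqg b a ltac:(lia)). rewrite dsym in Hdab. nra. }
  set (Kk := Nat.log2_up (m + 2)).
  destruct (Nat.log2_up_spec (m + 2) ltac:(lia)) as [Hk1 Hk2]. fold Kk in Hk1, Hk2.
  assert (HDK : D <= L + INR Kk * delta).
  { unfold m in Hk2. destruct (Nat.leb a b) eqn:E.
    - apply Nat.leb_le in E.
      apply (core p n L D y (gam t1) (gam t2) a b HL ltac:(lia) Hst HD Ha2 Hb2 Hg0 Kk Hk2).
    - apply Nat.leb_gt in E.
      apply (core p n L D y (gam t2) (gam t1) b a HL ltac:(lia) Hst HD); auto.
      rewrite gr_sym; auto. rewrite gr_sym; auto. rewrite gr_sym; auto. }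
  assert (Hpow : 2 ^ Kk <= 2 * (6 * lam * L + 6 * lam + mu + 2) + 12 * lam * delta * INR Kk).
  { assert (Kk = S (Nat.pred Kk)) as EK.
    { destruct Kk eqn:E0; auto. simpl in Hk2. lia. }
    assert (H2 : INR (2 ^ Kk) <= 2 * INR (m + 2)).
    { rewrite EK. simpl Nat.pow. apply Nat.lt_le_incl in Hk1.
      replace (2 ^ Nat.pred Kk + 0)%nat with (2 ^ Nat.pred Kk)%nat by lia.
      rewrite plus_INR. apply le_INR in Hk1. lra. }
    rewrite pow_INR in H2. replace (INR 2) with 2 in H2 by (simpl; lra).
    rewrite plus_INR in H2. replace (INR 2) with 2 in H2 by (simpl; lra).
    assert (0 <= INR Kk) by apply pos_INR. nra. }
  specialize (HK0 Kk Hpow).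
  assert (HDb : D <= L + K0 * delta) by nra.
  subst l. destruct (neargeo (p 0%nat) (p n) q gam G0 G1 G2) as [t [Ht Htq]].
  destruct (Hnear t Ht) as [i [Hi1 Hi2]]. exists i; split; auto.
  pose proof (dtri q (gam t) (p i)). lra.
Qed.

End Met.


Lemma firstn_step {T} (w : list T) i : (i < length w)%nat ->
  exists l, In l w /\ firstn (S i) w = firstn i w ++ l :: nil.
Proof.
  revert i; induction w as [|a w IH]; intros i H; simpl in H. lia.
  destruct i. exists a; simpl; auto.
  destruct (IH i ltac:(lia)) as [l [H1 H2]]. exists l; split; simpl; auto.
  simpl in H2. rewrite H2. auto.
Qed.

Lemma dIVT (F : nat -> R) n v : F 0%nat <= v -> v < F n -> exists i, (i < n)%nat /\ F i <= v < F (S i).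
Proof.
  induction n; intros H0 H1. lra.
  destruct (Rlt_dec v (F n)) as [H|H].
  - destruct (IHn H0 H) as [i [Hi1 Hi2]]. exists i; split; auto.
  - exists n; split; auto. lra.
Qed.

Section Main.
Variables (G : Type) (mul : G -> G -> G) (inv : G -> G) (e : G).
Hypothesis Hgrp : is_group mul inv e.
Variable S : list G.
Hypothesis HS : generates mul inv e (fun g => In g S).
Variables (X : Type) (d : X -> X -> R).
Hypothesis Hmet : is_metric d.
Hypothesis Hgeo : geodesic_space d.
Variable delta : R.
Hypothesis Hdelta : 0 <= delta.
Hypothesis Hhyp : hyperbolic d delta.
Variable act : G -> X -> X.
Hypothesis Hact : isometric_action mul e d act.
Variable x : X.
Hypothesis Hprop : proper_rel mul inv e S d act x.
Variable k : nat.
Hypothesis HR2 : R2k mul inv d act x delta k.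

Lemma dsym' a b : d a b = d b a. Proof. apply dsym; auto. Qed.
Lemma dtri' a b c : d a c <= d a b + d b c. Proof. apply dtri; auto. Qed.
Lemma dpos' a b : 0 <= d a b. Proof. apply dpos; auto. Qed.
Lemma dself' a : d a a = 0. Proof. apply dself; auto. Qed.

Definition A (g : G) : Prop := In g S \/ act g x = x.
Notation wl := (wlen_le mul inv e A).
Notation rho g := (d x (act g x)).

Lemma act_e p : act e p = p.
Proof. apply (proj1 Hact). Qed.
Lemma act_mul g h p : act (mul g h) p = act g (act h p).
Proof. apply (proj1 (proj2 Hact)). Qed.
Lemma act_iso g p q : d (act g p) (act g q) = d p q.
Proof. apply (proj2 (proj2 Hact)). Qed.
Lemma act_inv g p : act (inv g) (act g p) = p.
Proof. rewrite <- act_mul, (gVl Hgrp), act_e; auto. Qed.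
Lemma act_inv' g p : act g (act (inv g) p) = p.
Proof. rewrite <- act_mul, (gVr Hgrp), act_e; auto. Qed.

Lemma rho_rel g h : d (act g x) (act h x) = rho (mul (inv g) h).
Proof. rewrite <- (act_iso (inv g)), act_inv, act_mul; auto. Qed.

Lemma rho_inv g : rho (inv g) = rho g.
Proof. rewrite <- (act_iso g), act_inv', dsym'; auto. Qed.

Lemma gromov_act g p q r : gromov d (act g p) (act g q) (act g r) = gromov d p q r.
Proof. unfold gromov. rewrite !act_iso; auto. Qed.

Definition L0 := fold_right (fun s acc => d x (act s x) + acc) 0 S.
Definition L := 1 + L0.

Lemma fold_pos (l : list G) : 0 <= fold_right (fun s acc => d x (act s x) + acc) 0 l.
Proof. induction l as [|a l IH]; simpl. lra. pose proof (dpos' x (act a x)). lra. Qed.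

Lemma fold_bd (l : list G) a : In a l -> rho a <= fold_right (fun s acc => d x (act s x) + acc) 0 l.
Proof.
  induction l as [|s l IH]; simpl; intro H. contradiction.
  destruct H as [->|H]. pose proof (fold_pos l). lra.
  pose proof (dpos' x (act s x)). specialize (IH H). lra.
Qed.

Lemma L0_pos : 0 <= L0.
Proof. apply fold_pos. Qed.

Lemma L_ge1 : 1 <= L.
Proof. unfold L. pose proof L0_pos. lra. Qed.

Lemma A_bd a : A a -> rho a <= L0.
Proof.
  intros [H|H]. apply fold_bd; auto.
  rewrite H, dself'; auto. apply L0_pos.
Qed.

Lemma letter_bd l : A (snd l) -> rho (letter_val inv l) <= L0.
Proof.
  intro H. destruct l as [[|] a]; unfold letter_val; simpl in *.
  rewrite rho_inv. apply A_bd; auto. apply A_bd; auto.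
Qed.

Lemma word_bd w : word_over A w -> rho (word_val mul inv e w) <= L * INR (length w).
Proof.
  induction w as [|l w IH]; intro H.
  - simpl. rewrite act_e, dself'; auto. lra.
  - change (length (l :: w)) with (Datatypes.S (length w)). rewrite S_INR.
    change (word_val mul inv e (l :: w)) with (mul (letter_val inv l) (word_val mul inv e w)).
    inversion H; subst. specialize (IH H3). rewrite act_mul.
    pose proof (dtri' x (act (letter_val inv l) x) (act (letter_val inv l) (act (word_val mul inv e w) x))).
    rewrite act_iso in H0. pose proof (letter_bd l H2).
    pose proof (pos_INR (length w)). unfold L in *. nra.
Qed.

Lemma wl_rho g n : wl g n -> rho g <= L * INR n.
Proof.
  intros [w [H1 [H2 H3]]]. subst. eapply Rle_trans. apply word_bd; auto.
  apply Rmult_le_compat_l. pose proof L_ge1; lra. apply le_INR; auto.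
Qed.

Lemma prop_bd r : exists M, forall g, rho g <= r -> wl g M.
Proof.
  destruct (INR_archimed 1 r ltac:(lra)) as [N HN].
  destruct (proj2 Hprop N) as [M HM]. exists M. intros g Hg. apply HM. lra.
Qed.

Lemma gen_A g : exists n, wl g n.
Proof.
  destruct (HS g) as [w [H1 H2]]. exists (length w). exists w; repeat split; auto.
  unfold word_over in *. eapply Forall_impl; [|exact H1]. intros a Ha; left; auto.
Qed.
Definition cc := L + INR k * delta.

Lemma cc_ge1 : 1 <= cc.
Proof. unfold cc. pose proof L_ge1. pose proof (pos_INR k). nra. Qed.

Lemma gromov_inv g h : gromov d (act (inv g) x) (act (mul (inv g) h) x) x = gromov d x (act h x) (act g x).
Proof. rewrite <- (gromov_act g), act_mul, !act_inv'. auto. Qed.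

Lemma split_lemma g : 0 < rho g -> exists u, rho u <= rho g / 2 + cc /\ rho (mul (inv u) g) <= rho g / 2 + cc.
Proof.
  intro Hg.
  destruct (HS g) as [w [Hw1 Hw2]].
  assert (Hw : word_over A w).
  { unfold word_over in *. eapply Forall_impl; [|exact Hw1]. intros a Ha; left; auto. }
  set (P := fun i => word_val mul inv e (firstn i w)).
  set (F := fun i => gromov d (act (P i) x) (act g x) x).
  assert (F0 : F 0%nat = 0).
  { unfold F, P, gromov. simpl. rewrite act_e, dself', dsym'. lra. }
  assert (Fn : F (length w) = rho g).
  { unfold F, P, gromov. rewrite firstn_all, Hw2, dself', dsym'. lra. }
  destruct (dIVT F (length w) (rho g / 2) ltac:(lra) ltac:(lra)) as [i [Hi1 [Hi2 Hi3]]].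
  assert (Hstep : F (Datatypes.S i) <= F i + L0).
  { destruct (firstn_step w i Hi1) as [l [Hl1 Hl2]].
    assert (HAl : A (snd l)).
    { unfold word_over in Hw. rewrite Forall_forall in Hw. apply Hw; auto. }
    assert (EP : P (Datatypes.S i) = mul (P i) (letter_val inv l)).
    { unfold P. rewrite Hl2, (wv_app Hgrp). simpl. rewrite (gIr Hgrp). auto. }
    assert (Hd : d (act (P (Datatypes.S i)) x) (act (P i) x) <= L0).
    { rewrite EP, act_mul. rewrite act_iso, dsym'. apply letter_bd; auto. }
    unfold F, gromov. pose proof (dtri' (act (P (Datatypes.S i)) x) (act (P i) x) (act g x)).
    pose proof (dtri' (act (P (Datatypes.S i)) x) (act (P i) x) x).
    pose proof (dtri' (act (P i) x) (act (P (Datatypes.S i)) x) (act g x)).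
    rewrite (dsym' (act (P (Datatypes.S i)) x) (act (P i) x)) in *. lra. }
  destruct (HR2 g (P i)) as [u [Hu1 [Hu2 Hu3]]].
  exists u. rewrite gromov_inv in Hu2.
  assert (Fi : gromov d (act g x) (act (P i) x) x = F i) by (unfold F; apply gr_sym; auto).
  rewrite Fi in Hu1.
  assert (Hid : gromov d x (act (P i) x) (act g x) = rho g - F i).
  { unfold F, gromov. rewrite (dsym' (act (P i) x) (act g x)), (dsym' (act g x) x), (dsym' (act (P i) x) x). lra. }
  rewrite Hid in Hu2. pose proof L0_pos. unfold cc, L. split; lra.
Qed.

Lemma linbd : exists lam mu, 0 <= lam /\ 0 <= mu /\
  forall g, exists m, wl g m /\ INR m <= lam * rho g + mu.
Proof.
  destruct (prop_bd (4 * cc)) as [M HM].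
  pose proof cc_ge1 as Hc.
  set (Al := INR M / cc).
  assert (HAl : Al * cc = INR M) by (unfold Al; field; lra).
  assert (HAl0 : 0 <= Al) by (unfold Al; apply Rmult_le_pos; [apply pos_INR|apply Rlt_le, Rinv_0_lt_compat; lra]).
  assert (Claim : forall N g, rho g <= INR N * cc -> exists m, wl g m /\ INR m <= Rmax (INR M) (Al * (rho g - 2 * cc))).
  { induction N; intros g Hg.
    - exists M; split. apply HM. simpl in Hg. lra. apply Rmax_l.
    - destruct (Rle_dec (rho g) (4 * cc)) as [H4|H4].
      + exists M; split. apply HM; auto. apply Rmax_l.
      + destruct (split_lemma g ltac:(lra)) as [u [Hu1 Hu2]].
        rewrite S_INR in Hg.
        destruct (IHN u ltac:(lra)) as [m1 [Hm1 Hm1']].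
        destruct (IHN (mul (inv u) g) ltac:(lra)) as [m2 [Hm2 Hm2']].
        exists (m1 + m2)%nat. split.
        * pose proof (wl_mul Hgrp Hm1 Hm2) as W. rewrite (gKr Hgrp) in W. auto.
        * rewrite plus_INR. eapply Rle_trans; [|apply Rmax_r].
          assert (forall v, v <= rho g / 2 + cc -> Rmax (INR M) (Al * (v - 2 * cc)) <= Al * (rho g / 2 - cc)).
          { intros v Hv. apply Rmax_lub. rewrite <- HAl. nra. nra. }
          pose proof (H _ Hu1). pose proof (H _ Hu2). lra. }
  exists Al, (INR M). split; auto. split. apply pos_INR.
  intro g. destruct (INR_archimed cc (rho g) ltac:(lra)) as [N HN].
  destruct (Claim N g ltac:(lra)) as [m [Hm1 Hm2]]. exists m; split; auto.
  eapply Rle_trans; [exact Hm2|]. apply Rmax_lub. pose proof (dpos' x (act g x)). nra. nra.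
Qed.
Lemma gtrans a b c : mul (mul (inv a) b) (mul (inv b) c) = mul (inv a) c.
Proof. rewrite <- (gA Hgrp), (gKr Hgrp). auto. Qed.

Notation cd := (cay_dist mul inv e A).

Lemma wl_comp a b c n m : wl (mul (inv a) b) n -> wl (mul (inv b) c) m -> wl (mul (inv a) c) (n + m).
Proof. intros H1 H2. pose proof (wl_mul Hgrp H1 H2). rewrite gtrans in H. auto. Qed.

Lemma wl_sym a b n : wl (mul (inv a) b) n -> wl (mul (inv b) a) n.
Proof. intro H. apply (wl_inv Hgrp) in H. rewrite (gVM Hgrp), (gVV Hgrp) in H. auto. Qed.

Lemma betw (K0 : R) : 0 <= K0 -> exists K1, forall g c h n1 n2 n,
  cd g c n1 -> cd c h n2 -> cd g h n ->
  d (act g x) (act c x) + d (act c x) (act h x) <= d (act g x) (act h x) + K0 ->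
  INR n1 + INR n2 <= INR n + K1.
Proof.
  intro HK0.
  destruct linbd as [lam [mu [Hlam [Hmu Hlin]]]].
  destruct (morse X d Hmet delta Hdelta Hhyp Hgeo L lam mu (K0 / 2) L_ge1 Hlam Hmu ltac:(lra)) as [C HC].
  destruct (prop_bd C) as [M HM].
  exists (2 * INR M).
  intros g c h n1 n2 n [Hc1 Hc2] [Hh1 Hh2] [[w [Hw1 [Hw2 Hw3]]] Hmin] Hb.
  assert (Hlen : length w = n).
  { apply Nat.le_antisymm; auto. apply Hmin. exists w; repeat split; auto. }
  set (vf := fun i => word_val mul inv e (firstn i w)).
  set (P := fun i => mul g (vf i)).
  set (p := fun i => act (P i) x).
  assert (Hvs : forall i, word_val mul inv e w = mul (vf i) (word_val mul inv e (skipn i w))).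
  { intro i. unfold vf. rewrite <- (wv_app Hgrp), firstn_skipn. auto. }
  assert (HP : forall i, mul (inv g) (P i) = vf i).
  { intro i. unfold P. rewrite (gKl Hgrp). auto. }
  assert (HPh : forall i, mul (inv (P i)) h = word_val mul inv e (skipn i w)).
  { intro i. unfold P. rewrite (gVM Hgrp), <- (gA Hgrp), <- Hw2, (Hvs i), (gKl Hgrp). auto. }
  assert (p0 : p 0%nat = act g x).
  { unfold p, P, vf. simpl. rewrite (gIr Hgrp). auto. }
  assert (pn : p n = act h x).
  { unfold p, P, vf. rewrite <- Hlen, firstn_all, Hw2, (gKr Hgrp). auto. }
  assert (Hst : forall i, (i < n)%nat -> d (p i) (p (Datatypes.S i)) <= L).
  { intros i Hi. destruct (firstn_step w i ltac:(lia)) as [l [Hl1 Hl2]].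
    assert (HAl : A (snd l)).
    { unfold word_over in Hw1. rewrite Forall_forall in Hw1. apply Hw1; auto. }
    unfold p, P, vf. rewrite Hl2, (wv_app Hgrp). simpl. rewrite (gIr Hgrp).
    rewrite !act_mul, !act_iso. pose proof (letter_bd l HAl). unfold L. lra. }
  assert (Hqg : forall i j, (i <= j <= n)%nat -> INR (j - i) <= lam * d (p i) (p j) + mu).
  { intros i j Hij. destruct (Hlin (mul (inv (P i)) (P j))) as [m [Hm1 Hm2]].
    unfold p. rewrite rho_rel. eapply Rle_trans; [|exact Hm2]. apply le_INR.
    destruct Hm1 as [w' [Hw'1 [Hw'2 Hw'3]]].
    assert (Hsp : wl (mul (inv g) h) (i + m + (n - j))).
    { exists (firstn i w ++ w' ++ skipn j w). repeat split.
      - apply (wo_app (wo_firstn i Hw1)). apply (wo_app Hw'1 (wo_skipn j Hw1)).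
      - rewrite !(wv_app Hgrp), Hw'2, <- Hw2, (Hvs j). fold (vf i).
        unfold P. rewrite (gVM Hgrp), <- (gA Hgrp (inv (vf i)) (inv g) (mul g (vf j))), (gKl Hgrp), (gA Hgrp (vf i)), (gKr Hgrp). auto.
      - rewrite !length_app, length_firstn, length_skipn. lia. }
    specialize (Hmin _ Hsp). lia. }
  assert (Hq : gromov d (p 0%nat) (p n) (act c x) <= K0 / 2).
  { rewrite p0, pn. unfold gromov. rewrite (dsym' (act h x)). lra. }
  destruct (HC n p (act c x) Hst Hqg Hq) as [i [Hi1 Hi2]].
  assert (HcP : wl (mul (inv c) (P i)) M).
  { apply HM. rewrite <- rho_rel. exact Hi2. }
  assert (Hgp : wl (mul (inv g) (P i)) i).
  { rewrite HP. exists (firstn i w). repeat split. apply (wo_firstn i Hw1).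
    rewrite length_firstn. lia. }
  assert (Hph : wl (mul (inv (P i)) h) (n - i)).
  { rewrite HPh. exists (skipn i w). repeat split. apply (wo_skipn i Hw1).
    rewrite length_skipn. lia. }
  pose proof (Hc2 _ (wl_comp _ _ _ _ _ Hgp (wl_sym _ _ _ HcP))).
  pose proof (Hh2 _ (wl_comp _ _ _ _ _ HcP Hph)).
  apply le_INR in H. apply le_INR in H0. rewrite plus_INR in *.
  rewrite minus_INR in H0 by lia. lra.
Qed.
Definition kd := INR k * delta.
Lemma kd_pos : 0 <= kd.
Proof. unfold kd. pose proof (pos_INR k). nra. Qed.

Lemma center a b c : exists m,
  d (act a x) (act m x) <= gromov d (act b x) (act c x) (act a x) + kd /\
  d (act m x) (act b x) <= gromov d (act a x) (act c x) (act b x) + kd /\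
  d (act m x) (act c x) <= gromov d (act a x) (act b x) (act c x) + kd.
Proof.
  destruct (HR2 (mul (inv a) b) (mul (inv a) c)) as [u [H1 [H2 H3]]].
  exists (mul a u).
  assert (Eb : act a (act (mul (inv a) b) x) = act b x) by (rewrite act_mul, act_inv'; auto).
  assert (Ec : act a (act (mul (inv a) c) x) = act c x) by (rewrite act_mul, act_inv'; auto).
  rewrite gromov_inv in H2, H3.
  assert (E1 : gromov d (act (mul (inv a) b) x) (act (mul (inv a) c) x) x = gromov d (act b x) (act c x) (act a x))
    by (rewrite <- (gromov_act a), Eb, Ec; auto).
  assert (E2 : gromov d x (act (mul (inv a) c) x) (act (mul (inv a) b) x) = gromov d (act a x) (act c x) (act b x))
    by (rewrite <- (gromov_act a), Eb, Ec; auto).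
  assert (E3 : gromov d x (act (mul (inv a) b) x) (act (mul (inv a) c) x) = gromov d (act a x) (act b x) (act c x))
    by (rewrite <- (gromov_act a), Eb, Ec; auto).
  rewrite E1 in H1. rewrite E2 in H2. rewrite E3 in H3.
  unfold kd. split; [|split].
  - rewrite act_mul, act_iso. exact H1.
  - rewrite rho_rel, (gVM Hgrp), <- (gA Hgrp). exact H2.
  - rewrite rho_rel, (gVM Hgrp), <- (gA Hgrp). exact H3.
Qed.
Lemma cb (a b c m : X) :
  d a m <= gromov d b c a + kd -> d m b <= gromov d a c b + kd -> d m c <= gromov d a b c + kd ->
  d a m + d m b <= d a b + 2 * kd /\ d a m + d m c <= d a c + 2 * kd /\
  d b m + d m c <= d b c + 2 * kd /\ d a m >= gromov d b c a - kd.
Proof.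
  intros H1 H2 H3. unfold gromov in *.
  pose proof (dtri' a m b). pose proof (dtri' a m c).
  rewrite (dsym' b a), (dsym' c a), (dsym' c b), (dsym' b m) in *. repeat split; lra.
Qed.

Lemma claimT (W Y Aa B : X) c c' : 0 <= c -> 0 <= c' ->
  d W Aa + d Aa Y <= d W Y + c -> d W B + d B Y <= d W Y + c -> d W Aa >= d W B - c' ->
  d W B + d B Aa <= d W Aa + (3 * c' + 5 * c + 6 * delta).
Proof.
  intros Hc Hc' H1 H2 H3. pose proof (Hhyp B W Y Aa) as H. unfold gromov in H.
  pose proof (dtri' W B Y). pose proof (dtri' W Aa Y). pose proof (dtri' W B Aa).
  pose proof (dtri' Aa B Y). pose proof (dpos' W B).
  rewrite (dsym' W B), (dsym' Y B), (dsym' W Aa), (dsym' Aa B), (dsym' W Y), (dsym' Aa Y) in *.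
  unfold Rmin in H. destruct (Rle_dec _ _); lra.
Qed.

Lemma cd_tri a b c n m l : cd a b n -> cd b c m -> cd a c l -> (l <= n + m)%nat.
Proof. intros [H1 _] [H2 _] [_ H3]. apply H3. apply (wl_comp _ _ _ _ _ H1 H2). Qed.

Lemma cd_ex a b : exists n, cd a b n.
Proof. apply (cay_dist_ex a b). apply gen_A. Qed.

Lemma final : cay_hyperbolic mul inv e A.
Proof.
  pose proof kd_pos as Hkd.
  destruct (betw (20 * kd + 10 * delta) ltac:(lra)) as [K1 HK1].
  set (K := Rmax 0 K1).
  assert (HK : K1 <= K /\ 0 <= K) by (split; [apply Rmax_r|apply Rmax_l]).
  exists (3 * K). split. lra.
  intros w y z u dyw dzw dyz duw dyu duz Hyw Hzw Hyz Huw Hyu Huz.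
  apply (cay_dist_sym Hgrp) in Hyw, Hzw, Huw.
  destruct (center w y z) as [m1 [A1 [B1 C1]]].
  destruct (center w y u) as [m2 [A2 [B2 C2]]].
  destruct (center w u z) as [m3 [A3 [B3 C3]]].
  destruct (cb _ _ _ _ A1 B1 C1) as [R1a [R1b [R1c R1d]]].
  destruct (cb _ _ _ _ A2 B2 C2) as [R2a [R2b [R2c R2d]]].
  destruct (cb _ _ _ _ A3 B3 C3) as [R3a [R3b [R3c R3d]]].
  destruct (cd_ex w m1) as [a1 Ha1]. destruct (cd_ex m1 y) as [b1 Hb1]. destruct (cd_ex m1 z) as [c1 Hc1].
  destruct (cd_ex w m2) as [a2 Ha2]. destruct (cd_ex m2 y) as [b2 Hb2]. destruct (cd_ex m2 u) as [c2 Hc2].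
  destruct (cd_ex w m3) as [a3 Ha3]. destruct (cd_ex m3 u) as [b3 Hb3]. destruct (cd_ex m3 z) as [c3 Hc3].
  pose proof (cay_dist_sym Hgrp Hb1) as Hb1'.
  pose proof (cay_dist_sym Hgrp Hb2) as Hb2'.
  pose proof (cay_dist_sym Hgrp Hb3) as Hb3'.
  pose proof (HK1 _ _ _ _ _ _ Ha1 Hb1 Hyw ltac:(lra)) as G1a.
  pose proof (HK1 _ _ _ _ _ _ Ha1 Hc1 Hzw ltac:(lra)) as G1b.
  pose proof (HK1 _ _ _ _ _ _ Ha2 Hb2 Hyw ltac:(lra)) as G2a.
  pose proof (HK1 _ _ _ _ _ _ Hb2' Hc2 Hyu ltac:(lra)) as G2c.
  pose proof (HK1 _ _ _ _ _ _ Ha3 Hc3 Hzw ltac:(lra)) as G3b.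
  pose proof (HK1 _ _ _ _ _ _ Hb3' Hc3 Huz ltac:(lra)) as G3c.
  pose proof (cd_tri _ _ _ _ _ _ Hb1' Hc1 Hyz) as T1.
  pose proof (cd_tri _ _ _ _ _ _ Ha2 Hb2 Hyw) as T2a.
  pose proof (cd_tri _ _ _ _ _ _ Ha2 Hc2 Huw) as T2b.
  pose proof (cd_tri _ _ _ _ _ _ Ha3 Hb3 Huw) as T3a.
  pose proof (cd_tri _ _ _ _ _ _ Ha3 Hc3 Hzw) as T3b.
  apply le_INR in T1, T2a, T2b, T3a, T3b. rewrite plus_INR in T1, T2a, T2b, T3a, T3b.
  pose proof (Hhyp (act w x) (act y x) (act z x) (act u x)) as H4.
  unfold gprod.
  assert (Hmin : forall a b c : R, a >= b - 3 * K \/ a >= c - 3 * K -> a >= Rmin b c - 3 * K).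
  { intros a0 b0 c0 [H|H]; unfold Rmin; destruct (Rle_dec b0 c0); lra. }
  apply Hmin.
  unfold Rmin in H4. destruct (Rle_dec _ _) as [Hc|Hc].
  - left.
    pose proof (claimT (act w x) (act y x) (act m1 x) (act m2 x) (2 * kd) (delta + 2 * kd) ltac:(lra) ltac:(lra) R1a R2a ltac:(lra)) as HT.
    destruct (cd_ex m2 m1) as [f Hf].
    pose proof (HK1 _ _ _ _ _ _ Ha2 Hf Ha1 ltac:(lra)) as GG.
    pose proof (pos_INR f). lra.
  - right.
    pose proof (claimT (act w x) (act z x) (act m1 x) (act m3 x) (2 * kd) (delta + 2 * kd) ltac:(lra) ltac:(lra) R1b R3b ltac:(lra)) as HT.
    destruct (cd_ex m3 m1) as [f Hf].
    pose proof (HK1 _ _ _ _ _ _ Ha3 Hf Ha1 ltac:(lra)) as GG.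
    pose proof (pos_INR f). lra.
Qed.

End Main.


Theorem mainTheorem17
  (G : Type) (mul : G -> G -> G) (inv : G -> G) (e : G)
  (Hgrp : is_group mul inv e)
  (S : list G) (HS : generates mul inv e (fun g => In g S))
  (X : Type) (d : X -> X -> R) (Hmet : is_metric d) (Hgeo : geodesic_space d)
  (delta : R) (Hdelta : 0 <= delta) (Hhyp : hyperbolic d delta)
  (act : G -> X -> X) (Hact : isometric_action mul e d act)
  (x : X) (Hprop : proper_rel mul inv e S d act x)
  (k : nat) (HR2 : R2k mul inv d act x delta k) :
  weakly_rel_hyperbolic mul inv e S (fun g => act g x = x).
Proof.
  unfold weakly_rel_hyperbolic.
  eapply final; eauto.
Qed.
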